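(* Under the setting below, assume moreover that $f_\Theta^\star$ is strictly decreasing and continuous from $[0,\infty)$ onto $(0,1]$, with inverse $f_\Theta^{\star-1}$. Then each marginal satisfies $\Pr(X_i> x)=f_\Theta^\star(x)$ for $x\ge0$, and the survival copula $C$ of $(X_1,\dots,X_n)$, i.e. the function with $\Pr(X_1> x_1,\dots,X_n> x_n)=C\big(f_\Theta^\star(x_1),\dots,f_\Theta^\star(x_n)\big)$, is given for $u_i\in(0,1]$ by $$C(u_1,\dots,u_n)=\sum_{\ell_1=0}^{m_1}\cdots\sum_{\ell_n=0}^{m_n}\beta_{\ell_1,\dots,\ell_n}\,f_\Theta^\star\Big(\sum_{i=1}^n \ell_i\, f_\Theta^{\star-1}(u_i)\Big),$$ with $$\beta_{\ell_1,\dots,\ell_n}=\sum_{\nu_1=0}^{\ell_1}\cdots\sum_{\nu_n=0}^{\ell_n}(-1)^{\sum_{i=1}^n(\ell_i-\nu_i)}\Big[\prod_{i=1}^n\binom{m_i-\nu_i}{m_i-\ell_i}\Big]\Big[\prod_{i=1}^n\binom{m_i}{\nu_i}\Big]\alpha\Big(\tfrac{\nu_1}{m_1},\dots,\tfrac{\nu_n}{m_n}\Big).$$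
   Context: Setting: $n\ge2$, $m_1,\dots,m_n\ge1$ integers; $\alpha$ is a real function on the grid $\prod_i\{0,\tfrac1{m_i},\dots,1\}$ such that $C_B(u_1,\dots,u_n)=\sum_{\nu_1=0}^{m_1}\cdots\sum_{\nu_n=0}^{m_n}\alpha(\tfrac{\nu_1}{m_1},\dots,\tfrac{\nu_n}{m_n})\prod_{i=1}^n\binom{m_i}{\nu_i}u_i^{\nu_i}(1-u_i)^{m_i-\nu_i}$ is a copula on $[0,1]^n$. $(Z_1,\dots,Z_n)$ has standard exponential marginals and joint survival function $\Pr(Z_1>z_1,\dots,Z_n>z_n)=C_B(e^{-z_1},\dots,e^{-z_n})$. $\Theta$ is a positive random variable independent of $(Z_1,\dots,Z_n)$ with density $f_\Theta$ and Laplace transform $f_\Theta^\star(s)=E[e^{-s\Theta}]$, and $X_i=Z_i/\Theta$. *)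

(* Defs.v *)
From HB Require Import structures.
From mathcomp Require Import all_boot all_order all_algebra.
From mathcomp Require Import all_classical all_reals all_analysis.
Set Implicit Arguments. Unset Strict Implicit. Unset Printing Implicit Defensive.
Import Order.TTheory GRing.Theory Num.Theory numFieldNormedType.Exports.
Local Open Scope classical_set_scope.
Local Open Scope ring_scope.

Section defs.
Variable R : realType.

Definition copula (n : nat) (C : ('I_n -> R) -> R) : Prop :=
  [/\
      (forall u : 'I_n -> R, (forall i, 0 <= u i <= 1) ->
         (exists i, u i = 0) -> C u = 0),
      (forall (u : 'I_n -> R) (i : 'I_n), 0 <= u i <= 1 ->
         (forall j, j != i -> u j = 1) -> C u = u i) &
      (* n-increasing: nonnegative C-volume of every box [a,b] in [0,1]^n *)
      (forall a b : 'I_n -> R, (forall i, 0 <= a i /\ a i <= b i /\ b i <= 1) ->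
         0 <= \sum_(e : {ffun 'I_n -> bool})
                (-1) ^+ #|[set i | ~~ e i]| * C (fun i => if e i then b i else a i))].

(* a bound for all the m_i, used to index multi-indices nu with nu_i <= m_i *)
Definition mmax (n : nat) (m : 'I_n -> nat) : nat := \max_(i < n) m i.

Definition bernstein_copula (n : nat) (m : 'I_n -> nat) (alpha : ('I_n -> R) -> R)
  (u : 'I_n -> R) : R :=
  \sum_(nu : {ffun 'I_n -> 'I_(mmax m).+1} | [forall i, (nu i <= m i)%N])
     alpha (fun i => (nu i)%:R / (m i)%:R) *
     \prod_(i < n) ('C(m i, nu i)%:R * u i ^+ nu i * (1 - u i) ^+ (m i - nu i)).

Definition beta_coef (n : nat) (m : 'I_n -> nat) (alpha : ('I_n -> R) -> R)
  (l : 'I_n -> nat) : R :=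
  \sum_(nu : {ffun 'I_n -> 'I_(mmax m).+1} | [forall i, (nu i <= l i)%N])
     (-1) ^+ (\sum_(i < n) (l i - nu i))%N *
     (\prod_(i < n) 'C(m i - nu i, m i - l i)%:R) *
     (\prod_(i < n) 'C(m i, nu i)%:R) *
     alpha (fun i => (nu i)%:R / (m i)%:R).

(* the claimed survival copula, with L the Laplace transform, Linv its inverse *)
Definition survival_copula (n : nat) (m : 'I_n -> nat) (alpha : ('I_n -> R) -> R)
  (L Linv : R -> R) (u : 'I_n -> R) : R :=
  \sum_(l : {ffun 'I_n -> 'I_(mmax m).+1} | [forall i, (l i <= m i)%N])
     beta_coef m alpha (fun i => nat_of_ord (l i)) *
     L (\sum_(i < n) (l i)%:R * Linv (u i)).

Context {d : measure_display} {T : measurableType d}.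

Definition laplace (P : probability T R) (Theta : T -> R) (s : R) : R :=
  fine ('E_P[fun w => expR (- (s * Theta w))])%E.

Definition has_density (P : probability T R) (Theta : T -> R) (f : R -> R) : Prop :=
  [/\ measurable_fun setT f, (forall x, 0 <= f x) &
      forall A : set R, measurable A ->
        P (Theta @^-1` A) = (\int[lebesgue_measure]_(x in A) (f x)%:E)%E].

(* Theta independent of the random vector (Z_1,...,Z_n): product rule on
   sigma(Theta) x (measurable rectangles generating sigma(Z_1,...,Z_n)) *)
Definition indep_vec (P : probability T R) (n : nat) (Theta : T -> R)
  (Z : 'I_n -> T -> R) : Prop :=
  forall (A : set R) (B : 'I_n -> set R), measurable A -> (forall i, measurable (B i)) ->
    P (Theta @^-1` A `&` [set w | forall i, B i (Z i w)]) =
    (P (Theta @^-1` A) * P [set w | forall i, B i (Z i w)])%E.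

End defs.

(* Main.v *)
Require Import Defs.
From HB Require Import structures.
From mathcomp Require Import all_boot all_order all_algebra.
From mathcomp Require Import all_classical all_reals all_analysis.
From mathcomp Require Import measurable_realfun.
From mathcomp Require Import ring lra zify.
Import Order.TTheory GRing.Theory Num.Theory numFieldNormedType.Exports.
Local Open Scope classical_set_scope.
Local Open Scope ring_scope.
Section squeeze.
Context {R : realType} {d : measure_display} {T : measurableType d}
  (P : probability T R) (Theta : T -> R).
Hypothesis mTh : measurable_fun setT Theta.
Hypothesis Th0 : forall w, 0 <= Theta w.

Section fixN.
Variable h : R.
Hypothesis h0 : 0 < h.
Definition Ak (k : nat) := Theta @^-1` `[k%:R * h, k.+1%:R * h[.

Lemma mAk k : measurable (Ak k).
Proof. by rewrite /Ak -[X in measurable X]setTI; apply: mTh => //; exact: measurable_itv. Qed.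

Lemma tAk : trivIset setT Ak.
Proof.
move=> i j _ _ [w [/=]]; rewrite /Ak /= !in_itv /= => /andP[h1 h2] /andP[h3 h4].
have : (i%:R < j.+1%:R :> R) by rewrite -(ltr_pM2r h0); exact: le_lt_trans h1 h4.
have : (j%:R < i.+1%:R :> R) by rewrite -(ltr_pM2r h0); exact: le_lt_trans h3 h2.
rewrite !ltr_nat !ltnS => a b; apply/eqP; rewrite eqn_leq a b.
done.
Qed.

Lemma covAk : \bigcup_k Ak k = setT.
Proof.
apply/seteqP; split => // w _.
have t0 : 0 <= Theta w / h by rewrite divr_ge0 // ltW.
exists (Num.truncn (Theta w / h)) => //.
rewrite /Ak /= in_itv /=; have /andP[a b] := truncn_itv t0.
by rewrite -ler_pdivlMr // a /= -ltr_pdivrMr.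
Qed.

Definition qk k := fine (P (Ak k)).

Lemma PAk k : P (Ak k) = (qk k)%:E.
Proof. by rewrite /qk fineK // fin_num_measure //; exact: mAk. Qed.

Lemma qk_ge0 k : 0 <= qk k.
Proof. by rewrite /qk fine_ge0 // measure_ge0. Qed.

Lemma series_measure (E : set T) : measurable E ->
  P E = (\sum_(0 <= k <oo) P (E `&` Ak k))%E.
Proof.
move=> mE.
have -> : E = \bigcup_k (E `&` Ak k) by rewrite -setI_bigcupr covAk setIT.
rewrite measure_bigcup //=; last first.
  by apply: trivIset_setIl; exact: tAk.
  by move=> i _; apply: measurableI => //; exact: mAk.
rewrite eseries_mkcond; apply: eq_eseriesr => i _; rewrite in_setT.
by rewrite -setI_bigcupr covAk setIT.
Qed.

Lemma sumq : (\sum_(0 <= k <oo) (qk k)%:E = 1)%E.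
Proof.
rewrite -(probability_setT P) (@series_measure setT measurableT).
by apply: eq_eseriesr => k _; rewrite setTI PAk.
Qed.

Lemma mexp (s : R) : measurable_fun setT (EFin \o (fun w => expR (- (s * Theta w)))).
Proof.
apply/measurable_EFinP; apply: measurableT_comp => //.
apply: measurableT_comp => //; apply: measurable_funM => //.
Qed.

Lemma lap_series (s : R) : ('E_P[fun w => expR (- (s * Theta w))])%E =
  (\sum_(0 <= k <oo) (\int[P]_(w in Ak k) (expR (- (s * Theta w)))%:E))%E.
Proof.
rewrite unlock -ge0_integral_bigcup //.
- by rewrite covAk.
- exact: mAk.
- by rewrite covAk; exact: mexp.
- exact: tAk.
Qed.

Lemma int_Ak_le (s : R) k : 0 <= s ->
  (\int[P]_(w in Ak k) (expR (- (s * Theta w)))%:E <= (qk k * expR (- (s * (k%:R * h))))%:E)%E.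
Proof.
move=> s0.
apply: (@le_trans _ _ (\int[P]_(w in Ak k) (cst (expR (- (s * (k%:R * h))))%:E w))%E).
  apply: ge0_le_integral => //.
  - exact: mAk.
  - exact: (measurable_funS measurableT (@subsetT _ _) (mexp s)).
  - move=> x; rewrite /Ak /= in_itv /= => /andP[a b].
    by rewrite lee_fin ler_expR lerN2 ler_wpM2l.
rewrite integral_cst; last exact: mAk.
by rewrite le_eqVlt; apply/orP; left; apply/eqP; rewrite EFinM muleC; congr (_ * _)%E; exact: PAk.
Qed.

Lemma int_Ak_ge (s : R) k : 0 <= s ->
  ((qk k * expR (- (s * (k.+1%:R * h))))%:E <= \int[P]_(w in Ak k) (expR (- (s * Theta w)))%:E)%E.
Proof.
move=> s0.
apply: (@le_trans _ _ (\int[P]_(w in Ak k) (cst (expR (- (s * (k.+1%:R * h))))%:E w))%E).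
  rewrite integral_cst; last exact: mAk.
  by rewrite le_eqVlt; apply/orP; left; apply/eqP; rewrite EFinM muleC; congr (_ * _)%E; apply/esym; exact: PAk.
apply: ge0_le_integral => //.
- exact: mAk.
- by move=> x _; rewrite lee_fin expR_ge0.
- exact: (measurable_funS measurableT (@subsetT _ _) (mexp s)).
- move=> x; rewrite /Ak /= in_itv /= => /andP[a b].
  by rewrite lee_fin ler_expR lerN2 ler_wpM2l // ltW.
Qed.

Definition Xs (s : R) (phi : nat -> R) :=
  (\sum_(0 <= k <oo) (qk k * expR (- (s * phi k)))%:E)%E.

Lemma Xs_ge0 s phi : (0 <= Xs s phi)%E.
Proof. by apply: nneseries_ge0 => k _ _; rewrite lee_fin mulr_ge0 ?qk_ge0 ?expR_ge0. Qed.

Lemma Xs_le1 s phi : 0 <= s -> (forall k, 0 <= phi k) -> (Xs s phi <= 1)%E.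
Proof.
move=> s0 p0; rewrite -sumq; apply: lee_nneseries.
  by move=> k _ _; rewrite lee_fin mulr_ge0 ?qk_ge0 ?expR_ge0.
move=> k _; rewrite lee_fin ler_piMr ?qk_ge0 //.
by rewrite expR_le1 oppr_le0 mulr_ge0.
Qed.

Lemma Xs_fin s phi : 0 <= s -> (forall k, 0 <= phi k) -> (fine (Xs s phi))%:E = Xs s phi.
Proof.
move=> s0 p0; rewrite fineK // ge0_fin_numE ?Xs_ge0 //.
apply: (@le_lt_trans _ _ 1%E); first exact: Xs_le1.
exact: ltry.
Qed.

Lemma series_exch (J : finType) (c sj : J -> R) (phi : nat -> R) :
  (forall j, 0 <= c j) ->
  (\sum_(0 <= k <oo) (qk k * \sum_j c j * expR (- (sj j * phi k)))%:E)%E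
  = (\sum_j (c j)%:E * Xs (sj j) phi)%E.
Proof.
move=> c0.
under eq_eseriesr do rewrite mulr_sumr -sumEFin.
rewrite nneseries_sum; last first.
  by move=> j k _; rewrite lee_fin mulr_ge0 ?qk_ge0 // mulr_ge0 ?expR_ge0.
apply: eq_bigr => j _; rewrite /Xs -nneseriesZl; last first.
  by move=> k _; rewrite lee_fin mulr_ge0 ?qk_ge0 ?expR_ge0.
by apply: eq_eseriesr => k _; rewrite -EFinM mulrCA.
Qed.

Lemma Xs_shift s : Xs s (fun k => k.+1%:R * h)%R =
  ((expR (- (s * h)))%:E * Xs s (fun k => k%:R * h)%R)%E.
Proof.
rewrite /Xs -nneseriesZl; last first.
  by move=> k _; rewrite lee_fin mulr_ge0 ?qk_ge0 ?expR_ge0.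
apply: eq_eseriesr => k _; rewrite -EFinM; congr (_%:E).
rewrite [RHS]mulrCA -expRD.
congr (_ * expR _); rewrite -addn1 natrD; ring.
Qed.

Lemma lap_bounds s : 0 <= s ->
  (Xs s (fun k => k.+1%:R * h)%R <= 'E_P[fun w => expR (- (s * Theta w))])%E /\
  ('E_P[fun w => expR (- (s * Theta w))] <= Xs s (fun k => k%:R * h)%R)%E.
Proof.
move=> s0; rewrite lap_series; split; apply: lee_nneseries.
- by move=> k _ _; rewrite lee_fin mulr_ge0 ?qk_ge0 ?expR_ge0.
- by move=> k _; exact: int_Ak_ge.
- by move=> k _ _; apply: integral_ge0 => x _; rewrite lee_fin expR_ge0.
- by move=> k _; exact: int_Ak_le.
Qed.

Section main_h.
Variables (J : finType) (b sj : J -> R) (E : set T) (D : R -> set T).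
Hypothesis sj0 : forall j, 0 <= sj j.
Hypothesis mE : measurable E.
Hypothesis mD : forall t, 0 <= t -> measurable (D t).
Hypothesis hD : forall t, 0 <= t -> forall A, measurable A ->
  P (Theta @^-1` A `&` D t) =
  (P (Theta @^-1` A) * (\sum_j b j * expR (- (sj j * t)))%:E)%E.
Hypothesis hE1 : forall a w, 0 <= a -> Theta w <= a -> D a w -> E w.
Hypothesis hE2 : forall a w, 0 <= a -> a <= Theta w -> E w -> D a w.

Definition bp j := if 0 <= b j then b j else 0.
Definition bm j := if 0 <= b j then 0 else - b j.
Lemma bpm j : b j = bp j - bm j.
Proof. by rewrite /bp /bm; case: ifP => _; rewrite ?subr0 ?sub0r ?opprK. Qed.
Lemma bp_ge0 j : 0 <= bp j.
Proof. by rewrite /bp; case: ifP. Qed.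
Lemma bm_ge0 j : 0 <= bm j.
Proof. by rewrite /bm; case: ifP => // /negbT; rewrite -ltNge oppr_ge0 => /ltW. Qed.

Lemma Gsplit t : \sum_j b j * expR (- (sj j * t)) =
  \sum_j bp j * expR (- (sj j * t)) - \sum_j bm j * expR (- (sj j * t)).
Proof. by rewrite -sumrB; apply: eq_bigr => j _; rewrite bpm mulrBl. Qed.

Definition ek k := fine (P (E `&` Ak k)).
Lemma PEAk k : P (E `&` Ak k) = (ek k)%:E.
Proof. by rewrite /ek fineK // fin_num_measure //; apply: measurableI => //; exact: mAk. Qed.
Lemma ek_ge0 k : 0 <= ek k.
Proof. by rewrite /ek fine_ge0 // measure_ge0. Qed.

Lemma kh0 k : 0 <= k%:R * h.
Proof. by rewrite mulr_ge0 // ltW. Qed.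

Lemma upper_k k : ek k + qk k * (\sum_j bm j * expR (- (sj j * (k%:R * h)))) <=
  qk k * (\sum_j bp j * expR (- (sj j * (k%:R * h)))).
Proof.
have H : (P (E `&` Ak k) <= P (Ak k `&` D (k%:R * h)))%E.
  apply: le_measure; rewrite ?inE.
  - by apply: measurableI => //; exact: mAk.
  - by apply: measurableI; [exact: mAk|exact: mD (kh0 k)].
  move=> w [Ew Aw]; split => //; apply: hE2 => //; first exact: kh0.
  by move: Aw; rewrite /Ak /= in_itv /= => /andP[].
move: H; rewrite PEAk /Ak (hD _ (kh0 _)); last exact: measurable_itv.
rewrite -/(Ak k) PAk -EFinM lee_fin Gsplit mulrBr.
lra.
Qed.

Lemma lower_k k : qk k * (\sum_j bp j * expR (- (sj j * (k.+1%:R * h)))) <=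
  ek k + qk k * (\sum_j bm j * expR (- (sj j * (k.+1%:R * h)))).
Proof.
have H : (P (Ak k `&` D (k.+1%:R * h)) <= P (E `&` Ak k))%E.
  apply: le_measure; rewrite ?inE.
  - by apply: measurableI; [exact: mAk|exact: mD (kh0 k.+1)].
  - by apply: measurableI => //; exact: mAk.
  move=> w [Aw Dw]; split => //; apply: hE1 Dw; first exact: kh0.
  by move: Aw; rewrite /Ak /= in_itv /= => /andP[_ /ltW].
move: H; rewrite PEAk /Ak (hD _ (kh0 _)); last exact: measurable_itv.
rewrite -/(Ak k) PAk -EFinM lee_fin Gsplit mulrBr.
lra.
Qed.

Definition xj j := fine (Xs (sj j) (fun k => k%:R * h)%R).
Definition yj j := fine (Xs (sj j) (fun k => k.+1%:R * h)%R).

Lemma PE_fin : P E = (fine (P E))%:E.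
Proof. by rewrite fineK // fin_num_measure. Qed.

Lemma sumX (c : J -> R) (phi : nat -> R) : (forall k, 0 <= phi k) ->
  (\sum_j (c j)%:E * Xs (sj j) phi)%E = (\sum_j c j * fine (Xs (sj j) phi))%:E.
Proof.
move=> p0; rewrite -sumEFin; apply: eq_bigr => j _.
by rewrite EFinM Xs_fin.
Qed.

Lemma upper_sum : fine (P E) + \sum_j bm j * xj j <= \sum_j bp j * xj j.
Proof.
have H : (\sum_(0 <= k <oo) (ek k + qk k * (\sum_j bm j * expR (- (sj j * (k%:R * h)))))%:E
   <= \sum_(0 <= k <oo) (qk k * (\sum_j bp j * expR (- (sj j * (k%:R * h)))))%:E)%E.
  apply: lee_nneseries.
    move=> k _ _; rewrite lee_fin addr_ge0 ?ek_ge0 // mulr_ge0 ?qk_ge0 //.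
    by apply: sumr_ge0 => j _; rewrite mulr_ge0 ?bm_ge0 ?expR_ge0.
  by move=> k _; rewrite lee_fin upper_k.
move: H; under eq_eseriesr do rewrite EFinD.
rewrite nneseriesD; last 2 first.
  by move=> k _ _; rewrite lee_fin ek_ge0.
  move=> k _ _; rewrite lee_fin mulr_ge0 ?qk_ge0 //.
  by apply: sumr_ge0 => j _; rewrite mulr_ge0 ?bm_ge0 ?expR_ge0.
rewrite !series_exch; try by move=> j; rewrite ?bp_ge0 ?bm_ge0.
rewrite !sumX; try by move=> k; exact: kh0.
have -> : (\sum_(0 <= k <oo) (ek k)%:E)%E = P E.
  by rewrite (@series_measure E mE); apply: eq_eseriesr => k _; rewrite PEAk.
by rewrite PE_fin -EFinD lee_fin.
Qed.

Lemma lower_sum : \sum_j bp j * yj j <= fine (P E) + \sum_j bm j * yj j.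
Proof.
have H : (\sum_(0 <= k <oo) (qk k * (\sum_j bp j * expR (- (sj j * (k.+1%:R * h)))))%:E
   <= \sum_(0 <= k <oo) (ek k + qk k * (\sum_j bm j * expR (- (sj j * (k.+1%:R * h)))))%:E)%E.
  apply: lee_nneseries.
    move=> k _ _; rewrite lee_fin mulr_ge0 ?qk_ge0 //.
    by apply: sumr_ge0 => j _; rewrite mulr_ge0 ?bp_ge0 ?expR_ge0.
  by move=> k _; rewrite lee_fin lower_k.
move: H; under [X in (_ <= X)%E]eq_eseriesr do rewrite EFinD.
rewrite nneseriesD; last 2 first.
  by move=> k _ _; rewrite lee_fin ek_ge0.
  move=> k _ _; rewrite lee_fin mulr_ge0 ?qk_ge0 //.
  by apply: sumr_ge0 => j _; rewrite mulr_ge0 ?bm_ge0 ?expR_ge0.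
rewrite !series_exch; try by move=> j; rewrite ?bp_ge0 ?bm_ge0.
rewrite !sumX; try by move=> k; exact: kh0.
have -> : (\sum_(0 <= k <oo) (ek k)%:E)%E = P E.
  by rewrite (@series_measure E mE); apply: eq_eseriesr => k _; rewrite PEAk.
by rewrite PE_fin -EFinD lee_fin.
Qed.

Lemma j_facts j : [/\ yj j <= laplace P Theta (sj j), laplace P Theta (sj j) <= xj j,
  0 <= xj j, xj j <= 1 & yj j = expR (- (sj j * h)) * xj j].
Proof.
have [l1 l2] := @lap_bounds (sj j) (sj0 j).
have p0 : forall k, 0 <= (k%:R * h)%R by move=> k; exact: kh0.
have p1 : forall k, 0 <= (k.+1%:R * h)%R by move=> k; exact: kh0.
have hx := @Xs_fin (sj j) _ (sj0 j) p0.
have hy := @Xs_fin (sj j) _ (sj0 j) p1.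
have Efin : ('E_P[fun w => expR (- (sj j * Theta w))] \is a fin_num)%E.
  rewrite ge0_fin_numE; last by apply: le_trans l1; exact: Xs_ge0.
  by apply: le_lt_trans l2 _; rewrite -hx ltry.
split.
- by rewrite -lee_fin /yj hy /laplace fineK.
- by rewrite -lee_fin /xj hx /laplace fineK.
- by rewrite /xj fine_ge0 // Xs_ge0.
- by rewrite -lee_fin /xj hx; exact: Xs_le1.
- by rewrite /yj /xj Xs_shift -hx -EFinM.
Qed.

Lemma squeeze_h :
  fine (P E) <= \sum_j b j * laplace P Theta (sj j) + (\sum_j bp j * sj j) * h /\
  \sum_j b j * laplace P Theta (sj j) - (\sum_j bp j * sj j) * h <= fine (P E).
Proof.
have hx : forall j, xj j <= laplace P Theta (sj j) + sj j * h /\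
                    laplace P Theta (sj j) <= yj j + sj j * h.
  move=> j; have [a1 a2 a3 a4 a5] := j_facts j.
  have c1 := expR_ge1Dx (- (sj j * h)).
  have c0 : expR (- (sj j * h)) <= 1 by rewrite expR_le1 oppr_le0 mulr_ge0 // ltW.
  have : (1 - expR (- (sj j * h))) * xj j <= (1 - expR (- (sj j * h))) * 1.
    by rewrite ler_wpM2l // subr_ge0.
  rewrite a5 in a1 *; split; nra.
have Tsplit : \sum_j b j * laplace P Theta (sj j) =
  \sum_j bp j * laplace P Theta (sj j) - \sum_j bm j * laplace P Theta (sj j).
  by rewrite -sumrB; apply: eq_bigr => j _; rewrite bpm mulrBl.
have Ksum : (\sum_j bp j * sj j) * h = \sum_j bp j * (sj j * h).
  by rewrite mulr_suml; apply: eq_bigr => j _; rewrite mulrA.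
have u1 := upper_sum; have l1 := lower_sum.
have s1 : \sum_j bm j * laplace P Theta (sj j) <= \sum_j bm j * xj j.
  by apply: ler_sum => j _; rewrite ler_wpM2l ?bm_ge0 //; case: (j_facts j).
have s2 : \sum_j bm j * yj j <= \sum_j bm j * laplace P Theta (sj j).
  by apply: ler_sum => j _; rewrite ler_wpM2l ?bm_ge0 //; case: (j_facts j).
have s3 : \sum_j bp j * xj j <= \sum_j bp j * laplace P Theta (sj j) + \sum_j bp j * (sj j * h).
  rewrite -big_split; apply: ler_sum => j _ /=; rewrite -mulrDr ler_wpM2l ?bp_ge0 //.
  by case: (hx j).
have s4 : \sum_j bp j * laplace P Theta (sj j) <= \sum_j bp j * yj j + \sum_j bp j * (sj j * h).
  rewrite -big_split; apply: ler_sum => j _ /=; rewrite -mulrDr ler_wpM2l ?bp_ge0 //.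
  by case: (hx j).
rewrite Tsplit Ksum; split; lra.
Qed.
End main_h.
End fixN.

Lemma squeeze (J : finType) (b sj : J -> R) (E : set T) (D : R -> set T) :
  (forall j, 0 <= sj j) -> measurable E ->
  (forall t, 0 <= t -> measurable (D t)) ->
  (forall t, 0 <= t -> forall A, measurable A ->
    P (Theta @^-1` A `&` D t) =
    (P (Theta @^-1` A) * (\sum_j b j * expR (- (sj j * t)))%:E)%E) ->
  (forall a w, 0 <= a -> Theta w <= a -> D a w -> E w) ->
  (forall a w, 0 <= a -> a <= Theta w -> E w -> D a w) ->
  P E = (\sum_j b j * laplace P Theta (sj j))%:E.
Proof.
move=> sj0 mE mD hD hE1 hE2.
set K := \sum_j bp J b j * sj j.
have K0 : 0 <= K by apply: sumr_ge0 => j _; rewrite mulr_ge0 ?bp_ge0.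
suff H : fine (P E) = \sum_j b j * laplace P Theta (sj j).
  by rewrite -H fineK // fin_num_measure.
have key : forall e, 0 < e -> fine (P E) <= \sum_j b j * laplace P Theta (sj j) + e /\
   \sum_j b j * laplace P Theta (sj j) <= fine (P E) + e.
  move=> e e0.
  have h0 : 0 < e / (K + 1) by rewrite divr_gt0 // ltr_wpDl.
  have [u l] := @squeeze_h _ h0 J b sj E D sj0 mE mD hD hE1 hE2.
  have Kh : K * (e / (K + 1)) <= e.
    rewrite mulrA ler_pdivrMr ?ltr_wpDl //; nra.
  rewrite -/K in u l; split; lra.
apply/eqP; rewrite eq_le; apply/andP; split; apply/ler_addgt0Pr => e e0.
  by case: (key e e0).
by case: (key e e0).
Qed.
End squeeze.

Section poly.
Variable R : realType.

Definition gco (mi nu k : nat) : R :=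
  if (nu <= k <= mi)%N then (-1) ^+ (k - nu) * 'C(mi - nu, mi - k)%:R * 'C(mi, nu)%:R
  else 0.

Lemma factor_expand (M mi nu : nat) (x : R) : (mi <= M)%N -> (nu <= mi)%N ->
  'C(mi, nu)%:R * x ^+ nu * (1 - x) ^+ (mi - nu) =
  \sum_(k < M.+1) gco mi nu k * x ^+ k.
Proof.
move=> hM hnu.
have -> : \sum_(k < M.+1) gco mi nu k * x ^+ k =
          \sum_(nu <= k < mi.+1) gco mi nu k * x ^+ k.
  rewrite (big_nat_widen _ _ _ _ _ (hM : (mi.+1 <= M.+1)%N)) big_geq_mkord.
  rewrite [RHS]big_mkcond /=.
  apply: eq_bigr => k _; rewrite /gco ltnS.
  by rewrite andbC; case: ifP; rewrite ?mul0r.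
rewrite (big_addn 0 _ nu) subSn // big_mkord.
rewrite addrC exprD1n mulr_sumr.
apply: eq_bigr => t _.
have ht : (t <= mi - nu)%N by rewrite -ltnS.
rewrite /gco addnK leq_addl /=.
have -> : (t + nu <= mi)%N by lia.
have -> : (mi - (t + nu) = mi - nu - t)%N by lia.
rewrite bin_sub //.
rewrite -[(- x) ^+ t *+ _]mulr_natr.
have -> : (- x) ^+ t = (-1) ^+ t * x ^+ t by rewrite -exprMn mulN1r.
rewrite exprD; ring.
Qed.

Lemma prod_if (n : nat) (Pb : 'I_n -> bool) (F : 'I_n -> R) :
  \prod_i (if Pb i then F i else 0) = if [forall i, Pb i] then \prod_i F i else 0.
Proof.
case: ifP => [/forallP H|/negbT].
  by apply: eq_bigr => i _; rewrite H.
rewrite negb_forall => /existsP[i /negbTE Hi].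
by rewrite (bigD1 i) //= Hi mul0r.
Qed.

Lemma bern_expand (n : nat) (m : 'I_n -> nat) (alpha : ('I_n -> R) -> R) (u : 'I_n -> R) :
  bernstein_copula m alpha u =
  \sum_(l : {ffun 'I_n -> 'I_(mmax m).+1})
     (if [forall i, (l i <= m i)%N] then beta_coef m alpha (fun i => nat_of_ord (l i)) else 0) *
     \prod_i u i ^+ l i.
Proof.
rewrite /bernstein_copula.
have hM i : (m i <= mmax m)%N by rewrite /mmax; exact: (@leq_bigmax _ (fun j : 'I_n => m j) i).
transitivity (\sum_(nu : {ffun 'I_n -> 'I_(mmax m).+1} | [forall i, (nu i <= m i)%N])
   \sum_(l : {ffun 'I_n -> 'I_(mmax m).+1})
     alpha (fun i => (nu i)%:R / (m i)%:R) *
     \prod_i (gco (m i) (nu i) (l i) * u i ^+ l i)).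
  apply: eq_bigr => nu /forallP hnu.
  rewrite (eq_bigr (fun i => \sum_(k < (mmax m).+1) gco (m i) (nu i) k * u i ^+ k)).
    by rewrite bigA_distr_bigA mulr_sumr.
  by move=> i _; rewrite (@factor_expand (mmax m)) //; exact: hnu.
rewrite exchange_big /=; apply: eq_bigr => l _.
under eq_bigr do rewrite big_split /= mulrA.
rewrite -mulr_suml; congr (_ * _).
under eq_bigr do rewrite /gco prod_if.
case: ifP => hl.
  rewrite /beta_coef [LHS]big_mkcond [RHS]big_mkcond /=.
  apply: eq_bigr => nu _.
  case: (boolP [forall i, (nu i <= l i)%N]) => A.
    have -> : [forall i, (nu i <= m i)%N].
      by apply/forallP => i; exact: leq_trans (forallP A i) (forallP hl i).
    have -> : [forall i, (nu i <= l i <= m i)%N].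
      by apply/forallP => i; rewrite (forallP A i) (forallP hl i).
    rewrite big_split /= big_split /= prodrXr; ring.
  have -> : [forall i, (nu i <= l i <= m i)%N] = false.
    apply/negbTE; move: A; apply: contra => /forallP H.
    by apply/forallP => i; case/andP: (H i).
  by rewrite mulr0; case: ifP.
apply: big1 => nu _.
have -> : [forall i, (nu i <= l i <= m i)%N] = false.
  apply/negbTE; move/negbT: hl; apply: contra => /forallP H.
  by apply/forallP => i; case/andP: (H i).
by rewrite mulr0.
Qed.
End poly.

Theorem proposition1 (R : realType) (d : measure_display) (T : measurableType d)
  (P : probability T R) (n : nat) (m : 'I_n -> nat) (alpha : ('I_n -> R) -> R)
  (Z : 'I_n -> T -> R) (Theta : T -> R) (fTheta : R -> R) (Linv : R -> R) :
  (2 <= n)%N ->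
  (forall i, (1 <= m i)%N) ->
  copula (bernstein_copula m alpha) ->
  (forall i, measurable_fun setT (Z i)) ->
  (forall i (z : R), 0 <= z -> P [set w | z < Z i w] = (expR (- z))%:E) ->
  (forall z : 'I_n -> R, (forall i, 0 <= z i) ->
     P [set w | forall i, z i < Z i w] =
     (bernstein_copula m alpha (fun i => expR (- z i)))%:E) ->
  measurable_fun setT Theta ->
  (forall w, 0 < Theta w) ->
  has_density P Theta fTheta ->
  indep_vec P Theta Z ->
  (* Laplace transform strictly decreasing, continuous, [0,oo) onto (0,1] *)
  (forall s t : R, 0 <= s -> s < t -> laplace P Theta t < laplace P Theta s) ->
  {within `[0, +oo[%classic, continuous (laplace P Theta)} ->
  (forall s : R, 0 <= s -> 0 < laplace P Theta s <= 1) ->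
  (forall u : R, 0 < u <= 1 -> exists2 s, 0 <= s & laplace P Theta s = u) ->
  (* Linv is its inverse *)
  (forall s : R, 0 <= s -> Linv (laplace P Theta s) = s) ->
  (forall u : R, 0 < u <= 1 -> 0 <= Linv u /\ laplace P Theta (Linv u) = u) ->
  (forall i (x : R), 0 <= x ->
     P [set w | x < Z i w / Theta w] = (laplace P Theta x)%:E) /\
  (forall x : 'I_n -> R, (forall i, 0 <= x i) ->
     P [set w | forall i, x i < Z i w / Theta w] =
     (survival_copula m alpha (laplace P Theta) Linv
        (fun i => laplace P Theta (x i)))%:E).
Proof.
move=> n2 m1 Ccop mZ hZ1 hZ mTh Thp dens indep dec cont Lr Ls Linv1 Linv2.
have Th0 : forall w, 0 <= Theta w by move=> w; exact: ltW.
have mlt : forall f g : T -> R, measurable_fun setT f -> measurable_fun setT g ->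
    measurable [set w | f w < g w].
  move=> f g mf mg.
  have -> : [set w | f w < g w] = (g \- f) @^-1` `]0, +oo[.
    by apply/seteqP; split => w /=; rewrite in_itv /= andbT subr_gt0.
  rewrite -[X in measurable X]setTI.
  exact: (measurable_funB mg mf measurableT (measurable_itv `]0, +oo[)).
split.
- move=> i x x0.
  have -> : [set w | x < Z i w / Theta w] = [set w | x * Theta w < Z i w].
    by apply/seteqP; split => w /=; rewrite ltr_pdivlMr.
  have eqD : forall t, [set w | x * t < Z i w] =
      [set w | forall j, (if j == i then `]x * t, +oo[%classic else setT) (Z j w)].
    move=> t; apply/seteqP; split => w /=.
      by move=> h j; case: eqP => [->|_] //=; rewrite in_itv /= andbT.
    by move=> /(_ i); rewrite eqxx /= in_itv /= andbT.
  rewrite (@squeeze R d T P Theta mTh Th0 'I_1 (fun _ => 1) (fun _ => x)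
     [set w | x * Theta w < Z i w] (fun t => [set w | x * t < Z i w])).
  + by rewrite big_ord1 mul1r.
  + by [].
  + by apply: mlt => //; exact: (measurable_funM (measurable_cst x) mTh).
  + by move=> t t0; apply: mlt => //; exact: measurable_cst.
  + move=> t t0 A mA; rewrite big_ord1 mul1r eqD (indep A (fun j => if j == i then `]x * t, +oo[%classic else setT)) //; last first.
      by move=> j; case: eqP => _; [exact: measurable_itv|exact: measurableT].
    by rewrite -eqD hZ1 // mulr_ge0.
  + move=> a w a0 Ha /=; apply: le_lt_trans; exact: ler_wpM2l.
  + move=> a w a0 Ha /=; apply: le_lt_trans; exact: ler_wpM2l.
- move=> x x0.
  have -> : [set w | forall i, x i < Z i w / Theta w] =
            [set w | forall i, x i * Theta w < Z i w].
    by apply/seteqP; split => w /= h i; move: (h i); rewrite ltr_pdivlMr.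
  have mall : forall f : 'I_n -> T -> R, (forall i, measurable_fun setT (f i)) ->
      measurable [set w | forall i, f i w < Z i w].
    move=> f mf.
    have -> : [set w | forall i, f i w < Z i w] =
              \bigcap_(i in setT) [set w | f i w < Z i w].
      by apply/seteqP; split => w /= h i; [move=> _; exact: h|exact: h].
    apply: fin_bigcap_measurable; first exact: finite_finset.
    by move=> i _; apply: mlt.
  have eqD : forall t, [set w | forall i, x i * t < Z i w] =
      [set w | forall i, (`]x i * t, +oo[%classic) (Z i w)].
    move=> t; apply/seteqP; split => w /= h i; move: (h i) => /=;
      by rewrite in_itv /= andbT.
  rewrite (@squeeze R d T P Theta mTh Th0 {ffun 'I_n -> 'I_(mmax m).+1}
     (fun l => if [forall i, (l i <= m i)%N]
               then beta_coef m alpha (fun i => nat_of_ord (l i)) else 0)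
     (fun l => \sum_i (l i)%:R * x i)
     [set w | forall i, x i * Theta w < Z i w] (fun t => [set w | forall i, x i * t < Z i w])).
  + congr EFin; rewrite /survival_copula [RHS]big_mkcond; apply: eq_bigr => l _ /=.
    case: ifP => _; last by rewrite mul0r.
    congr (_ * laplace P Theta _); apply: eq_bigr => i _; rewrite Linv1 //.
  + by move=> l; apply: sumr_ge0 => i _; rewrite mulr_ge0.
  + by apply: mall => i; exact: (measurable_funM (measurable_cst (x i)) mTh).
  + by move=> t t0; apply: mall => i; exact: measurable_cst.
  + move=> t t0 A mA.
    rewrite eqD (indep A (fun i => `]x i * t, +oo[%classic)) //.
    rewrite -eqD (hZ (fun i => x i * t)); last by move=> i; rewrite mulr_ge0.
    congr (_ * EFin _)%E; rewrite bern_expand; apply: eq_bigr => l _; congr (_ * _).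
    under eq_bigr do rewrite -expRM_natl.
    rewrite -expR_sum; congr expR; rewrite mulr_suml -sumrN.
    by apply: eq_bigr => i _; ring.
  + by move=> a w a0 Ha h i; apply: le_lt_trans (h i); exact: ler_wpM2l.
  + by move=> a w a0 Ha h i; apply: le_lt_trans (h i); exact: ler_wpM2l.
Qed.
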